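(* Let $I$ be a set, $\mathcal{E}=(E_i)_{i\in I}$ a family of nonempty sets, $R$ a multiple relation in $\mathcal{E}$, and $J,K\subseteq J_R$ two subsets that are both detachable from $R$. Then $J\cup K$ is detachable from $R$.
   Context: For $J\subseteq I$, $Z_J=\prod_{j\in J}E_j$ ($Z_\emptyset=\{\bullet\}$). A multiple relation is $R=(J_R,G_R)$ with $J_R\subseteq I$, $G_R\subseteq Z_{J_R}$. For $K\subseteq J_R$, $R_{|K}=(K,\{x_{|K}:x\in G_R\})$. $1_J=(J,Z_J)$. Product: $R\bowtie S=(J_R\cup J_S,\{x\in Z_{J_R\cup J_S}: x_{|J_R}\in G_R,\ x_{|J_S}\in G_S\})$. For $J\subseteq J_R$ put $\neg J=J_R\setminus J$; $J$ is detachable from $R$ if $R=R_{|\neg J}\bowtie 1_J$. *)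

(* Defs.v *)
Set Implicit Arguments.

Section MultRel.
Variables (I : Type) (E : I -> Type).

Definition Z (J : I -> Prop) : Type := forall j : {i : I | J i}, E (proj1_sig j).

Record mrel : Type := MRel { JR : I -> Prop; GR : Z JR -> Prop }.

Definition restr (J K : I -> Prop) (h : forall i, K i -> J i) (x : Z J) : Z K :=
  fun k => x (exist J (proj1_sig k) (h (proj1_sig k) (proj2_sig k))).

Definition mrestr (R : mrel) (K : I -> Prop) (h : forall i, K i -> JR R i) : mrel :=
  @MRel K (fun y => exists x, GR R x /\ @restr (JR R) K h x = y).

Definition one (J : I -> Prop) : mrel := @MRel J (fun _ => True).

Definition setU (A B : I -> Prop) : I -> Prop := fun i => A i \/ B i.

Definition mprod (R S : mrel) : mrel :=
  @MRel (setU (JR R) (JR S))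
    (fun x => GR R (@restr (setU (JR R) (JR S)) (JR R) (fun i h => or_introl h) x)
           /\ GR S (@restr (setU (JR R) (JR S)) (JR S) (fun i h => or_intror h) x)).

Definition negJ (R : mrel) (J : I -> Prop) : I -> Prop := fun i => JR R i /\ ~ J i.

Definition negJ_sub (R : mrel) (J : I -> Prop) : forall i, negJ R J i -> JR R i :=
  fun i h => proj1 h.

(* J is detachable from R if R = R_{|¬J} ⋈ 1_J (literal equality of multiple relations) *)
Definition detachable (R : mrel) (J : I -> Prop) : Prop :=
  R = mprod (@mrestr R (negJ R J) (@negJ_sub R J)) (one J).

End MultRel.

(* Main.v *)
Require Import Defs.
From Stdlib Require Import Classical FunctionalExtensionality PropExtensionality ProofIrrelevance ClassicalDescription.

Section Aux.
Variables (I : Type) (E : I -> Type).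

Lemma cast_app (P Q : I -> Prop) (e : P = Q) (x : Z E P) i p q :
  eq_rect P (Z E) x Q e (exist Q i q) = x (exist P i p).
Proof. subst Q. simpl. rewrite (proof_irrelevance _ q p). reflexivity. Qed.

Lemma eq_GR (R S : mrel E) (H : R = S) (x : Z E (JR R)) :
  GR R x <-> GR S (eq_rect _ (Z E) x _ (f_equal (@JR I E) H)).
Proof. destruct H. simpl. tauto. Qed.

Lemma mrel_eq (P Q : I -> Prop) (e : P = Q) (G : Z E P -> Prop) (G' : Z E Q -> Prop) :
  (forall x, G x <-> G' (eq_rect _ (Z E) x _ e)) -> @MRel I E P G = @MRel I E Q G'.
Proof.
  subst Q. simpl. intro H. f_equal. apply functional_extensionality; intro x.
  apply propositional_extensionality. apply H.
Qed.

Definition Ag (P L : I -> Prop) (x y : Z E P) :=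
  forall i (h : P i), ~ L i -> x (exist P i h) = y (exist P i h).

Lemma det_fwd (R : mrel E) L : detachable R L ->
  forall x y, Ag (JR R) L x y -> GR R x -> GR R y.
Proof.
  intros H x y Hxy Gx. apply (proj2 (eq_GR _ _ H y)).
  simpl. split; [|exact Logic.I].
  exists x. split; [exact Gx|].
  apply functional_extensionality_dep. intros [i [hP hnL]].
  unfold restr. simpl. rewrite (cast_app _ _ (f_equal (@JR I E) H) y i hP). rewrite (proof_irrelevance _ (negJ_sub _) hP). exact (Hxy i hP hnL).
Qed.

Lemma det_bwd (R : mrel E) L : (forall i, L i -> JR R i) ->
  (forall x y, Ag (JR R) L x y -> GR R x -> GR R y) -> detachable R L.
Proof.
  intros hL Hc. unfold detachable. destruct R as [P G]. simpl in *.
  assert (e : P = setU (negJ (@MRel I E P G) L) L).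
  { apply functional_extensionality; intro i. apply propositional_extensionality.
    unfold setU, negJ; simpl. split.
    - intro p. destruct (classic (L i)); [right|left]; tauto.
    - intros [[p _]|l]; auto. }
  apply (mrel_eq _ _ e). intro x. simpl. split.
  - intro Gx. split; [|exact Logic.I]. exists x. split; [exact Gx|].
    apply functional_extensionality_dep. intros [i [hP hnL]].
    unfold restr. simpl. rewrite (cast_app _ _ e x i hP). rewrite (proof_irrelevance _ (negJ_sub _) hP). reflexivity.
  - intros [[x' [Gx' Heq]] _]. apply (Hc x'); [|exact Gx'].
    intros i h hn. pose proof (f_equal (fun f => f (exist _ i (conj h hn))) Heq) as Hi.
    unfold restr in Hi. simpl in Hi. rewrite (cast_app _ _ e x i h) in Hi. match type of Hi with x' (exist _ _ ?pp) = _ => rewrite (proof_irrelevance _ pp h) in Hi end. exact Hi.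
Qed.
End Aux.

Theorem mainTheorem3 (I : Type) (E : I -> Type)
  (hE : forall i, inhabited (E i))
  (R : mrel E) (J K : I -> Prop)
  (hJ : forall i, J i -> JR R i) (hK : forall i, K i -> JR R i) :
  detachable R J -> detachable R K -> detachable R (setU J K).
Proof.
  intros dJ dK. apply det_bwd.
  - intros i [a|b]; auto.
  - intros x y Hxy Gx.
    set (z := fun j : {i | JR R i} =>
      if excluded_middle_informative (J (proj1_sig j)) then y j else x j).
    assert (Gz : GR R z).
    { apply (det_fwd _ _ _ _ dJ x); [|exact Gx]. intros i h hn. unfold z; simpl.
      destruct (excluded_middle_informative (J i)); tauto. }
    apply (det_fwd _ _ _ _ dK z); [|exact Gz]. intros i h hn. unfold z; simpl.
    destruct (excluded_middle_informative (J i)); [reflexivity|].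
    apply Hxy. unfold setU. tauto.
Qed.
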